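(* Let $k\geq 0$ and $\mathcal{P}\subseteq\mathbb{Z}_{\geq0}$, working with formal power series over a commutative ring $R\supseteq\mathbb{Q}$. Then $$P^{k,\mathcal{P}}(u,z)=F^{k,\mathcal{P}}(u,z)\,e^{T^{k,\mathcal{P}}(u,z)}.$$
   Context: $[n]=\{1,\dots,n\}$. Labeled rooted tree: tree on vertex set $[m]$ with a distinguished root; children of $v$ are its neighbours farther from the root; the height of a vertex $v$ is the maximal distance from $v$ down to a leaf of its subtree; a tree satisfies $\mathcal{P}$ if each vertex has a number of children in $\mathcal{P}$. $T^{k,\mathcal{P}}(u,z)=\sum_t u^{\chi_k(t)}z^{|t|}/|t|!$ over all labeled rooted trees satisfying $\mathcal{P}$, $\chi_k(t)$ = number of vertices of height $<k$. $F^{k,\mathcal{P}}(u,z)=\sum_{n\ge0}\frac{z^n}{n!}\sum_f u^{\,n-|f^k([n])|}$ over functions $f:[n]\to[n]$ with $|f^{-1}(x)|\in\mathcal{P}$ for all $x$. $P^{k,\mathcal{P}}(u,z)$ is defined by the same formula but summing over partial functions $f$ on $[n]$ (maps from some subset $S\subseteq[n]$ into $[n]$) with $|f^{-1}(x)|\in\mathcal{P}$ for every $x\in[n]$; here $f^k([n])$ is the set of values $f^k(x)$ over $x$ at which $f^k$ is defined. $e^w=\sum w^n/n!$. *)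

(* Defs.v *)
From mathcomp Require Import all_boot all_order all_algebra.
Set Implicit Arguments. Unset Strict Implicit. Unset Printing Implicit Defensive.
Import GRing.Theory.
Local Open Scope ring_scope.

(* ---------- Labeled rooted trees on [m] = 'I_m, encoded by parent maps ----------
   A rooted tree on 'I_m is encoded by its parent map par : 'I_m -> 'I_m,
   where par r = r for the root r and par x is the neighbour of x closer
   to the root otherwise.  Such maps are exactly those with a unique point r
   to which every vertex is sent by iterating par (m iterations suffice). *)

Definition rtree (m : nat) (par : {ffun 'I_m -> 'I_m}) : bool :=
  [exists r : 'I_m, (par r == r) && [forall x : 'I_m, iter m par x == r]].

Definition child (m : nat) (par : {ffun 'I_m -> 'I_m}) (x v : 'I_m) : bool :=
  (par x == v) && (x != v).

Definition nchildren (m : nat) (par : {ffun 'I_m -> 'I_m}) (v : 'I_m) : nat :=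
  #|[set x | child par x v]|.

Definition is_leaf (m : nat) (par : {ffun 'I_m -> 'I_m}) (w : 'I_m) : bool :=
  nchildren par w == 0%N.

Definition down_dist (m : nat) (par : {ffun 'I_m -> 'I_m}) (w v : 'I_m) (j : nat)
  : bool :=
  (iter j par w == v) && [forall i : 'I_j, iter i par w != v].

Definition height (m : nat) (par : {ffun 'I_m -> 'I_m}) (v : 'I_m) : nat :=
  \max_(w | is_leaf par w) \max_(j < m | down_dist par w v j) j.

Definition chi (k m : nat) (par : {ffun 'I_m -> 'I_m}) : nat :=
  #|[set v | (height par v < k)%N]|.

Definition treeP (P : pred nat) (m : nat) (par : {ffun 'I_m -> 'I_m}) : bool :=
  [forall v, nchildren par v \in P].

(* ---------- bivariate series: z-coefficients are polynomials in u ----------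
   A series  sum_n a_n(u) z^n  is represented by n |-> a_n(u) : {poly R}. *)

Definition series (R : comUnitRingType) := nat -> {poly R}.

Definition sermul (R : comUnitRingType) (a b : series R) : series R :=
  fun n => \sum_(i < n.+1) a i * b (n - i)%N.

Definition serpow (R : comUnitRingType) (a : series R) (j : nat) : series R :=
  iter j (sermul a) (fun n => if n is 0%N then 1 else 0).

(* exponential of a series with zero constant term (only terms j <= n
   contribute to the coefficient of z^n) *)
Definition serexp (R : comUnitRingType) (a : series R) : series R :=
  fun n => \sum_(j < n.+1) ((j`!)%:R : R)^-1 *: serpow a j n.

Definition egf (R : comUnitRingType) (c : nat -> {poly R}) : series R :=
  fun n => ((n`!)%:R : R)^-1 *: c n.

Definition Tser (R : comUnitRingType) (k : nat) (P : pred nat) : series R :=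
  egf (fun m => \sum_(par : {ffun 'I_m -> 'I_m} | rtree par && treeP P par)
                   'X^(chi k par)).

Definition Fser (R : comUnitRingType) (k : nat) (P : pred nat) : series R :=
  egf (fun n => \sum_(f : {ffun 'I_n -> 'I_n} |
                        [forall x : 'I_n, #|[set y | f y == x]| \in P])
                  'X^(n - #|[set iter k f x | x : 'I_n]|)).

Definition piter (n k : nat) (f : {ffun 'I_n -> option 'I_n}) (x : 'I_n)
  : option 'I_n :=
  iter k (fun o => obind f o) (Some x).

Definition Pser (R : comUnitRingType) (k : nat) (P : pred nat) : series R :=
  egf (fun n => \sum_(f : {ffun 'I_n -> option 'I_n} |
                        [forall x : 'I_n, #|[set y | f y == Some x]| \in P])
                  'X^(n - #|[set z : 'I_n | [exists x, piter k f x == Some z]]|)).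

(* Main.v *)
Require Import Defs.
From mathcomp Require Import all_boot all_order all_algebra zify.
Set Implicit Arguments. Unset Strict Implicit. Unset Printing Implicit Defensive.
Import GRing.Theory.
Section Basic.
Variable N : nat.
Notation PF := {ffun 'I_N -> option 'I_N}.
Implicit Types (f g h : PF) (S A B : {set 'I_N}).

Lemma iter_obind_None j f : iter j (fun o => obind f o) None = None.
Proof. by elim: j => //= j ->. Qed.

Lemma piter0 f x : piter 0 f x = Some x. Proof. by []. Qed.

Lemma piterS j f x : piter j.+1 f x = obind f (piter j f x).
Proof. by []. Qed.

Lemma piterSr j f x : piter j.+1 f x = obind (piter j f) (f x).
Proof.
rewrite /piter iterSr /=; case: (f x) => //=; exact: iter_obind_None.
Qed.

Lemma piterD i j f x : piter (i + j) f x = obind (piter i f) (piter j f x).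
Proof.
rewrite /piter iterD; case: (iter j _ _) => //=; exact: iter_obind_None.
Qed.

Lemma piter_None_le i j f x : i <= j -> piter i f x = None -> piter j f x = None.
Proof. by move=> /subnK <- Hi; rewrite piterD Hi. Qed.

Definition closed A f : bool :=
  [forall x in A, if f x is Some y then y \in A else true].

Lemma closedP A f : closed A f -> forall x y, x \in A -> f x = Some y -> y \in A.
Proof. by move=> /forall_inP H x y xA fx; have := H x xA; rewrite fx. Qed.

Lemma piter_in A f : closed A f -> forall j x y, x \in A -> piter j f x = Some y -> y \in A.
Proof.
move=> cA; elim=> [|j IH] x y xA; first by rewrite piter0; case=> <-.
rewrite piterS; case E: (piter j f x) => [z|] //= fz.
exact: (closedP cA (IH _ _ xA E) fz).
Qed.

Lemma pig A f x : closed A f -> x \in A -> piter #|A| f x != None ->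
  forall j, piter j f x != None.
Proof.
move=> cA xA Hs.
pose yv (i : 'I_#|A|.+1) := odflt x (piter i f x).
have Hdef i : i <= #|A| -> piter i f x = Some (odflt x (piter i f x)).
  move=> le; case E: (piter i f x) => //.
  by move: Hs; rewrite (piter_None_le le E).
have [/existsP [a /existsP [b /andP [ab /eqP eab]]] | Hn] :=
    boolP [exists a : 'I_#|A|.+1, exists b : 'I_#|A|.+1, (a < b)%N && (yv a == yv b)].
  have Pab : piter a f x = piter b f x.
    by rewrite (Hdef a (ltn_ord a)) (Hdef b (ltn_ord b)); congr Some.
  have per t : piter (t + b) f x = piter (t + a) f x by rewrite !piterD Pab.
  elim/ltn_ind => j IH.
  have [le|lt] := leqP j #|A|; first by rewrite (Hdef j le).
  have bj : (b <= j)%N by apply: (leq_trans _ (ltnW lt)); exact: (ltn_ord b).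
  rewrite -(subnK bj) per; apply: IH.
  by rewrite -{2}(subnK bj) ltn_add2l.
exfalso.
have inj : injective yv.
  move=> a b eab; apply/val_inj; case: (ltngtP a b) => // H; exfalso.
    by move: Hn; rewrite negb_exists => /forallP /(_ a);
       rewrite negb_exists => /forallP /(_ b); rewrite H eab eqxx.
  by move: Hn; rewrite negb_exists => /forallP /(_ b);
     rewrite negb_exists => /forallP /(_ a); rewrite H eab eqxx.
have sub : [set yv i | i : 'I_#|A|.+1] \subset A.
  apply/subsetP => _ /imsetP [i _ ->]; rewrite /yv.
  rewrite (Hdef i (ltn_ord i)) /=. apply: (piter_in cA xA). exact: Hdef (ltn_ord i).
by move: (subset_leq_card sub); rewrite card_imset // card_ord ltnn.
Qed.

End Basic.


Section Struct.
Variable N : nat.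
Notation PF := {ffun 'I_N -> option 'I_N}.
Implicit Types (f g h : PF) (S A B : {set 'I_N}).

Definition cl S f : bool :=
  [forall x, if f x is Some y then (x \in S) && (y \in S) else true].
Definition fibok (P : pred nat) S f :=
  [forall x in S, #|[set y | f y == Some x]| \in P].
Definition img k S f := [set z | [exists x in S, piter k f x == Some z]].
Definition acyc S f := [forall x in S, piter N f x == None].
Definition tot S f := [forall x in S, f x != None].
Definition restr A f : PF := [ffun x => if x \in A then f x else None].
Definition merge A g h : PF := [ffun x => if x \in A then g x else h x].

Lemma clP S f : cl S f -> forall x y, f x = Some y -> x \in S /\ y \in S.
Proof. by move=> /forallP H x y fx; have := H x; rewrite fx => /andP. Qed.

Lemma cl_out S f x : cl S f -> x \notin S -> f x = None.
Proof.
move=> c xS; case E: (f x) => [y|] //; have [] := clP c E.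
by rewrite (negbTE xS).
Qed.

Lemma cl_closed S f : cl S f -> closed S f.
Proof.
move=> c; apply/forall_inP => x xS; case E: (f x) => [y|] //.
by case: (clP c E).
Qed.

Lemma cl_intro S f : closed S f -> (forall x, x \notin S -> f x = None) -> cl S f.
Proof.
move=> c o; apply/forallP => x; case E: (f x) => [y|] //.
have [xS|xS] := boolP (x \in S); last by rewrite o in E.
by rewrite (closedP c xS E).
Qed.

Lemma agree_piter B f g : (forall x, x \in B -> f x = g x) -> closed B g ->
  forall j x, x \in B -> piter j f x = piter j g x.
Proof.
move=> fg cB; elim=> [|j IH] x xB; first by [].
rewrite !piterSr fg //; case E: (g x) => [y|] //=.
exact: IH (closedP cB xB E).
Qed.

Lemma img_sub k S f : closed S f -> img k S f \subset S.
Proof.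
move=> c; apply/subsetP => z; rewrite inE => /exists_inP [x xS /eqP E].
exact: piter_in c _ _ _ xS E.
Qed.

Section Merge.
Variables (S A : {set 'I_N}) (g h : PF).
Hypotheses (sAS : A \subset S) (cg : cl A g) (ch : cl (S :\: A) h).
Let f := merge A g h.

Lemma mergeA x : x \in A -> f x = g x.
Proof. by move=> xA; rewrite /f ffunE xA. Qed.
Lemma mergeB x : x \notin A -> f x = h x.
Proof. by move=> xA; rewrite /f ffunE (negbTE xA). Qed.

Lemma m_closedA : closed A f.
Proof.
apply/forall_inP => x xA; rewrite mergeA //; case E: (g x) => [y|] //.
by case: (clP cg E).
Qed.

Lemma m_closedB : closed (S :\: A) f.
Proof.
apply/forall_inP => x; rewrite inE => /andP [xA xS]; rewrite mergeB //.
case E: (h x) => [y|] //; by case: (clP ch E).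
Qed.

Lemma m_cl : cl S f.
Proof.
apply/forallP => x; have [xA|xA] := boolP (x \in A).
  rewrite mergeA //; case E: (g x) => [y|] //; have [] := clP cg E.
  by move=> /(subsetP sAS) -> /(subsetP sAS) ->.
rewrite mergeB //; case E: (h x) => [y|] //; have [] := clP ch E.
by rewrite !inE => /andP [_ ->] /andP [_ ->].
Qed.

Lemma m_piterA j x : x \in A -> piter j f x = piter j g x.
Proof.
apply: agree_piter; [exact: mergeA | exact: cl_closed].
Qed.

Lemma m_piterB j x : x \in S :\: A -> piter j f x = piter j h x.
Proof.
apply: agree_piter; last exact: cl_closed.
by move=> y; rewrite inE => /andP [yA _]; exact: mergeB.
Qed.

Lemma m_fibA x : x \in A -> [set y | f y == Some x] = [set y | g y == Some x].
Proof.
move=> xA; apply/setP => y; rewrite !inE.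
have [yA|yA] := boolP (y \in A); first by rewrite mergeA.
rewrite mergeB //; case E: (h y) => [z|]; last by rewrite (cl_out cg yA).
rewrite (cl_out cg yA); have [_] := clP ch E; rewrite inE => /andP [zA _].
by apply/eqP => [[zx]]; rewrite zx xA in zA.
Qed.

Lemma m_fibB x : x \in S :\: A -> [set y | f y == Some x] = [set y | h y == Some x].
Proof.
move=> xB; have xA : x \notin A by move: xB; rewrite inE => /andP [].
apply/setP => y; rewrite !inE.
have [yA|yA] := boolP (y \in A); last first.
  by rewrite mergeB.
rewrite mergeA //; have hy : h y = None by apply: (cl_out ch); rewrite inE yA.
rewrite hy; case E: (g y) => [z|] //; have [_ zA] := clP cg E.
by apply/eqP => [[zx]]; rewrite -zx zA in xA.
Qed.

Lemma m_fibok P : fibok P S f = fibok P A g && fibok P (S :\: A) h.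
Proof.
apply/idP/andP => [/forall_inP H | [/forall_inP H1 /forall_inP H2]].
  split; apply/forall_inP => x xX.
    by rewrite -m_fibA //; apply: H; exact: (subsetP sAS).
  by rewrite -m_fibB //; apply: H; move: xX; rewrite inE => /andP [].
apply/forall_inP => x xS; have [xA|xA] := boolP (x \in A).
  by rewrite m_fibA //; exact: H1.
have xB : x \in S :\: A by rewrite inE xA.
by rewrite m_fibB //; exact: H2.
Qed.

Lemma m_img k : img k S f = img k A g :|: img k (S :\: A) h.
Proof.
apply/setP => z; rewrite !inE; apply/exists_inP/orP.
  move=> [x xS E]; have [xA|xA] := boolP (x \in A).
    by left; apply/exists_inP; exists x => //; rewrite -m_piterA.
  have xB : x \in S :\: A by rewrite inE xA.
  by right; apply/exists_inP; exists x => //; rewrite -m_piterB.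
case=> /exists_inP [x xX E].
  by exists x; [exact: (subsetP sAS) | rewrite m_piterA].
by exists x; [move: xX; rewrite inE => /andP [] | rewrite m_piterB].
Qed.

Lemma m_wt k : (#|S| - #|img k S f| =
  (#|A| - #|img k A g|) + (#|S :\: A| - #|img k (S :\: A) h|))%N.
Proof.
have s1 := img_sub k (cl_closed cg); have s2 := img_sub k (cl_closed ch).
have dis : [disjoint img k A g & img k (S :\: A) h].
  rewrite -setI_eq0; apply/eqP/setP => z; rewrite [RHS]inE [z \in _ :&: _]inE.
  apply/negbTE/negP => /andP [z1 z2].
  by move: (subsetP s1 z z1) (subsetP s2 z z2); rewrite inE => ->.
rewrite m_img cardsU (disjoint_setI0 dis) cards0 subn0.
have eS : #|S| = (#|A| + #|S :\: A|)%N.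
  by rewrite -(cardsID A S) (setIidPr sAS) addnC.
have l1 := subset_leq_card s1; have l2 := subset_leq_card s2.
rewrite eS; move: l1 l2; set a := #|A|; set b := #|S :\: A|; set c := #|img k A g|; set d := #|img k _ h|; lia.
Qed.

Lemma m_restrA : restr A f = g.
Proof.
apply/ffunP => x; rewrite ffunE; case: ifP => xA; first by rewrite mergeA.
by rewrite (cl_out cg) // xA.
Qed.

Lemma m_restrB : restr (S :\: A) f = h.
Proof.
apply/ffunP => x; rewrite ffunE; case: ifP => xB.
  by rewrite mergeB //; move: xB; rewrite inE => /andP [].
by rewrite (cl_out ch) // xB.
Qed.

Lemma m_acyc : acyc S f = acyc A g && acyc (S :\: A) h.
Proof.
apply/idP/andP => [/forall_inP H | [/forall_inP H1 /forall_inP H2]].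
  split; apply/forall_inP => x xX.
    by rewrite -m_piterA //; apply: H; exact: (subsetP sAS).
  by rewrite -m_piterB //; apply: H; move: xX; rewrite inE => /andP [].
apply/forall_inP => x xS; have [xA|xA] := boolP (x \in A).
  by rewrite m_piterA //; exact: H1.
have xB : x \in S :\: A by rewrite inE xA.
by rewrite m_piterB //; exact: H2.
Qed.

End Merge.

Lemma restr_cl A f : closed A f -> cl A (restr A f).
Proof.
move=> c; apply: cl_intro.
  apply/forall_inP => x xA; rewrite ffunE xA.
  case E: (f x) => [y|] //; rewrite (closedP c xA E).
  by [].
by move=> x xA; rewrite ffunE (negbTE xA).
Qed.

Lemma restr_closed A f : closed A f -> closed A (restr A f).
Proof. by move=> c; apply: cl_closed; exact: restr_cl. Qed.

Lemma merge_restr S A f : cl S f -> merge A (restr A f) (restr (S :\: A) f) = f.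
Proof.
move=> c; apply/ffunP => x; rewrite ffunE; case: ifP => xA; rewrite ffunE ?xA //.
rewrite inE xA /=; case: ifP => // xS; rewrite (cl_out c) //.
by rewrite xS.
Qed.

End Struct.


Section Sums.
Variable R : comUnitRingType.
Variables (k : nat) (P : pred nat) (N : nat).
Notation PF := {ffun 'I_N -> option 'I_N}.
Implicit Types (f g h : PF) (S A B : {set 'I_N}).
Local Open Scope ring_scope.

Definition W S f : {poly R} := 'X^(#|S| - #|img k S f|).

Lemma W_merge S A g h : A \subset S -> cl A g -> cl (S :\: A) h ->
  W S (merge A g h) = W A g * W (S :\: A) h.
Proof. by move=> sAS cg ch; rewrite /W m_wt // exprD. Qed.

Lemma split_sum S A (Q Q1 Q2 : pred PF) (F F1 F2 : PF -> {poly R}) :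
  A \subset S ->
  (forall f, Q f -> [/\ cl S f, closed A f & closed (S :\: A) f]) ->
  (forall g h, cl A g -> cl (S :\: A) h -> Q (merge A g h) = Q1 g && Q2 h) ->
  (forall g, Q1 g -> cl A g) -> (forall h, Q2 h -> cl (S :\: A) h) ->
  (forall g h, Q1 g -> Q2 h -> F (merge A g h) = F1 g * F2 h) ->
  \sum_(f | Q f) F f = (\sum_(g | Q1 g) F1 g) * (\sum_(h | Q2 h) F2 h).
Proof.
move=> sAS HQ HQm H1 H2 HF.
rewrite big_distrl /=.
rewrite [RHS](eq_bigr (fun g => \sum_(h | Q2 h) F1 g * F2 h)); last first.
  by move=> g _; rewrite big_distrr.
rewrite pair_big /=.
rewrite (reindex_onto (fun p : PF * PF => merge A p.1 p.2)
                      (fun f => (restr A f, restr (S :\: A) f))) /=; last first.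
  by move=> f /HQ [c _ _]; rewrite merge_restr.
have key (p : PF * PF) : Q (merge A p.1 p.2) &&
   ((restr A (merge A p.1 p.2), restr (S :\: A) (merge A p.1 p.2)) == p)
   = Q1 p.1 && Q2 p.2.
  case: p => g h /=; apply/idP/idP.
    move=> /andP [Qm /eqP E]; have [cm c1 c2] := HQ _ Qm.
    have cg : cl A g by case: E => <- _; exact: restr_cl.
    have ch : cl (S :\: A) h by case: E => _ <-; exact: restr_cl.
    by rewrite -HQm.
  move=> /andP [q1 q2]; have cg := H1 _ q1; have ch := H2 _ q2.
  by rewrite HQm ?q1 ?q2 //= m_restrA // m_restrB.
apply: eq_big => [p|p]; first exact: key.
by rewrite key => /andP [q1 q2]; exact: HF.
Qed.

Lemma defN S f x : cl S f -> x \in S -> piter N f x != None ->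
  forall j, piter j f x != None.
Proof.
move=> c xS H; apply: (pig (cl_closed c) xS).
apply: contra H => /eqP E; apply/eqP; apply: (piter_None_le _ E).
by rewrite -[X in (_ <= X)%N]card_ord max_card.
Qed.

Lemma cyc_succ S f x y : cl S f -> x \in S -> f x = Some y ->
  (piter N f x != None) = (piter N f y != None).
Proof.
move=> c xS fx; have [_ yS] := clP c fx.
have N0 : (0 < N)%N := leq_ltn_trans (leq0n x) (ltn_ord x).
apply/idP/idP => H.
  by have := defN c xS H N.+1; rewrite piterSr fx.
have := defN c yS H N.-1.
have E : piter N.-1.+1 f x = piter N.-1 f y by rewrite piterSr fx.
by rewrite -E prednK.
Qed.

Lemma tot_piter A g x : closed A g -> tot A g -> x \in A ->
  forall j, piter j g x != None.
Proof.
move=> c t xA j; elim: j x xA => [|j IH] x xA //.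
rewrite piterSr; have := forall_inP t x xA; case E: (g x) => [y|] //= _.
exact: IH (closedP c xA E).
Qed.

Definition cyc S f := [set x in S | piter N f x != None].

Definition Psum S := \sum_(f | cl S f && fibok P S f) W S f.
Definition Fsum S := \sum_(f | cl S f && tot S f && fibok P S f) W S f.
Definition Forest S := \sum_(f | cl S f && acyc S f && fibok P S f) W S f.

Lemma decomp1 S : Psum S = \sum_(A : {set 'I_N} | A \subset S) Fsum A * Forest (S :\: A).
Proof.
rewrite /Psum (partition_big (cyc S) (fun A : {set 'I_N} => A \subset S)); last first.
  by move=> f _; apply/subsetP => x; rewrite inE => /andP [].
apply: eq_bigr => A sAS.
apply: (split_sum (S:=S) (A:=A)) => //.
- move=> f /andP [/andP [c _] /eqP E]; split => //.
    apply/forall_inP => x; rewrite -E inE => /andP [xS H].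
    case F: (f x) => [y|] //; have [_ yS] := clP c F.
    by rewrite inE yS -(cyc_succ c xS F) H.
  apply/forall_inP => x; rewrite -E !inE => /andP [H xS]; rewrite xS /= in H.
  case F: (f x) => [y|] //; have [_ yS] := clP c F.
  by rewrite !inE yS -(cyc_succ c xS F) H.
- move=> g h cg ch; rewrite m_cl // m_fibok //= cg ch /=.
  have -> : (cyc S (merge A g h) == A) = tot A g && acyc (S :\: A) h.
    apply/eqP/andP => [E | [t a]].
      split.
        apply/forall_inP => x xA.
        have : x \in cyc S (merge A g h) by rewrite E.
        rewrite inE => /andP [xS H]; rewrite m_piterA // in H.
        have := defN cg xA H 1; rewrite piterSr; by case: (g x).
      apply/forall_inP => x xB; have xA : x \notin A by move: xB; rewrite inE => /andP [].
      have xS : x \in S by move: xB; rewrite inE => /andP [].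
      rewrite -(@m_piterB _ S A g h ch) //; apply/negPn/negP => H.
      by move: xA; rewrite -E inE xS H.
    apply/setP => x; rewrite inE; have [xA|xA] := boolP (x \in A).
      by rewrite (subsetP sAS) //= m_piterA // (tot_piter (cl_closed cg)).
    have [xS|] := boolP (x \in S) => //=.
    have xB : x \in S :\: A by rewrite inE xA.
    by rewrite (@m_piterB _ S A g h ch) // (forall_inP a x xB).
  by rewrite -!andbA; do !bool_congr.
- by move=> g /andP [/andP []].
- by move=> h /andP [/andP []].
- by move=> g h /andP [/andP [cg _] _] /andP [/andP [ch _] _]; rewrite W_merge.
Qed.

End Sums.


Section Roots.
Variable N : nat.
Notation PF := {ffun 'I_N -> option 'I_N}.
Implicit Types (f g h : PF) (S A B : {set 'I_N}).

Definition st f (y : 'I_N) : 'I_N := if f y is Some z then z else y.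
Definition root f x := iter N (st f) x.

Lemma piter_st f x j y : piter j f x = Some y -> iter j (st f) x = y.
Proof.
elim: j y => [|j IH] y; first by rewrite piter0 => -[].
rewrite piterS; case E: (piter j f x) => [z|] //= fz.
by rewrite (IH _ E) /st fz.
Qed.

Lemma root_exists f x : piter N f x = None ->
  exists j r, [/\ (j <= N)%N, piter j f x = Some r & f r = None].
Proof.
move=> HN.
suff H : forall d j y, (j + d = N)%N -> piter j f x = Some y ->
    exists j r, [/\ (j <= N)%N, piter j f x = Some r & f r = None].
  exact: (H N 0 x).
elim=> [|d IH] j y jd Py; first by rewrite addn0 in jd; rewrite jd HN in Py.
case E: (f y) => [z|]; last by exists j, y; split => //; lia.
apply: (IH j.+1 z); first by lia.
by rewrite piterS Py.
Qed.

Lemma root_none f x : piter N f x = None -> f (root f x) = None.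
Proof.
move=> /root_exists [j [r [jN Pj fr]]].
have fix_r : st f r = r by rewrite /st fr.
have -> : root f x = iter (N - j) (st f) (iter j (st f) x) by rewrite -iterD subnK.
by rewrite (piter_st Pj) iter_fix.
Qed.

Lemma root_fixed f r : f r = None -> root f r = r.
Proof. by move=> fr; rewrite /root iter_fix // /st fr. Qed.

Lemma root_step f x y : piter N f x = None -> f x = Some y -> root f y = root f x.
Proof.
move=> Hx fxy.
have : iter N.+1 (st f) x = root f y by rewrite iterSr /st fxy.
by rewrite iterS -/(root f x) {1}/st root_none.
Qed.

Lemma iter_st_in A f x j : closed A f -> x \in A -> iter j (st f) x \in A.
Proof.
move=> c xA; elim: j => //= j IH; rewrite /st.
case E: (f _) => [z|] //; exact: (closedP c IH E).
Qed.

Lemma root_in A f x : closed A f -> x \in A -> root f x \in A.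
Proof. exact: iter_st_in. Qed.

Definition nroots A g := #|[set y in A | g y == None]|.

End Roots.

Section Decomp2.
Variable R : comUnitRingType.
Variables (k : nat) (P : pred nat) (N : nat).
Notation PF := {ffun 'I_N -> option 'I_N}.
Implicit Types (f g h : PF) (S A B : {set 'I_N}).
Local Open Scope ring_scope.

Definition Tree A := \sum_(g | cl A g && acyc A g && (nroots A g == 1%N) && fibok P A g)
   W R k A g.

Definition comp S f x0 := [set y in S | root f y == root f x0].

Lemma decomp2 S x0 : x0 \in S ->
  Forest R k P S = \sum_(A : {set 'I_N} | (A \subset S) && (x0 \in A))
      Tree A * Forest R k P (S :\: A).
Proof.
move=> x0S.
rewrite /Forest (partition_big (fun f => comp S f x0)
   (fun A : {set 'I_N} => (A \subset S) && (x0 \in A))); last first.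
  move=> f _; apply/andP; split; last by rewrite inE x0S eqxx.
  by apply/subsetP => x; rewrite inE => /andP [].
apply: eq_bigr => A /andP [sAS x0A].
apply: (split_sum (S:=S) (A:=A)) => //.
- move=> f /andP [/andP [/andP [c a] _] /eqP E]; split => //.
    apply/forall_inP => x; rewrite -E inE => /andP [xS H].
    case F: (f x) => [y|] //; have [_ yS] := clP c F.
    by rewrite inE yS (root_step (eqP (forall_inP a x xS)) F) H.
  apply/forall_inP => x; rewrite -E !inE => /andP [H xS]; rewrite xS /= in H.
  case F: (f x) => [y|] //; have [_ yS] := clP c F.
  by rewrite !inE yS (root_step (eqP (forall_inP a x xS)) F) H.
- move=> g h cg ch; rewrite m_cl // m_fibok // m_acyc //= cg ch /=.
  have [ag|ag] := boolP (acyc A g); last by rewrite /=.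
  have [ah|ah] := boolP (acyc (S :\: A) h); last by rewrite /= !andbF.
  set m := merge A g h.
  have am : acyc S m by rewrite m_acyc // ag ah.
  have cm : cl S m by exact: m_cl.
  have cmA : closed A m by exact: m_closedA.
  have cmB : closed (S :\: A) m by exact: m_closedB.
  have rA y : y \in A -> root m y \in A /\ g (root m y) = None.
    move=> yA; have rA := root_in cmA yA; split => //.
    rewrite -(mergeA g h rA) -/m; apply: root_none.
    by apply/eqP; apply: (forall_inP am); exact: (subsetP sAS).
  have rB y : y \in S :\: A -> root m y \in S :\: A.
    by move=> yB; exact: root_in cmB yB.
  have -> : (comp S m x0 == A) = (nroots A g == 1%N).
    apply/eqP/cards1P => [E | [r1 E1]].
      exists (root m x0); apply/setP => r; rewrite !inE.
      apply/idP/idP => [/andP [rA' /eqP gr] | /eqP ->]; last first.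
        by have [-> ->] := rA x0 x0A.
      apply/eqP.
      have : r \in comp S m x0 by rewrite E.
      rewrite inE => /andP [_ /eqP <-]; apply/esym/root_fixed.
      by rewrite /m mergeA.
    have r1P y : y \in A -> root m y = r1.
      move=> yA; have [ry gy] := rA y yA; apply/set1P; rewrite -E1 inE ry.
      by apply/eqP.
    apply/setP => y; rewrite inE; have [yA|yA] := boolP (y \in A).
      by rewrite (subsetP sAS) //= !r1P // eqxx.
    have [yS|] := boolP (y \in S) => //=.
    have yB : y \in S :\: A by rewrite inE yA.
    rewrite (r1P x0 x0A); apply/negbTE/eqP => E.
    by have := rB y yB; rewrite E inE -(r1P x0 x0A) (proj1 (rA x0 x0A)).
  by rewrite -!andbA; do !bool_congr.
- by move=> g /andP [/andP [/andP []]].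
- by move=> h /andP [/andP []].
- by move=> g h /andP [/andP [/andP [cg _] _] _] /andP [/andP [ch _] _]; rewrite W_merge.
Qed.

End Decomp2.


Section Relabel.
Variable R : comUnitRingType.
Variables (k : nat) (P : pred nat) (N m : nat).
Variables (sg : 'I_m -> 'I_N) (A : {set 'I_N}).
Hypothesis sg_inj : injective sg.
Hypothesis hA : forall x, (x \in A) = [exists i, sg i == x].
Notation PFN := {ffun 'I_N -> option 'I_N}.
Notation PFm := {ffun 'I_m -> option 'I_m}.
Local Open Scope ring_scope.

Definition rho (x : 'I_N) : option 'I_m := [pick i | sg i == x].

Lemma rho_sg i : rho (sg i) = Some i.
Proof.
rewrite /rho; case: pickP => [j /eqP /sg_inj -> // | H].
by have := H i; rewrite eqxx.
Qed.

Lemma rho_out x : x \notin A -> rho x = None.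
Proof.
move=> xA; rewrite /rho; case: pickP => [j /eqP E | //].
by move: xA; rewrite hA; case/existsP; exists j; rewrite E.
Qed.

Lemma rho_some x j : rho x = Some j -> x = sg j.
Proof. by rewrite /rho; case: pickP => [i /eqP E [<-] | ]. Qed.

Lemma sg_in i : sg i \in A.
Proof. by rewrite hA; apply/existsP; exists i. Qed.

Lemma in_sg x : x \in A -> exists i, x = sg i.
Proof. by rewrite hA => /existsP [i /eqP <-]; exists i. Qed.

Definition lift (g : PFm) : PFN :=
  [ffun x => if rho x is Some i then omap sg (g i) else None].
Definition unlift (f : PFN) : PFm := [ffun i => obind rho (f (sg i))].

Lemma lift_sg g i : lift g (sg i) = omap sg (g i).
Proof. by rewrite ffunE rho_sg. Qed.

Lemma lift_out g x : x \notin A -> lift g x = None.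
Proof. by move=> xA; rewrite ffunE rho_out. Qed.

Lemma cl_lift g : cl A (lift g).
Proof.
apply/forallP => x; rewrite ffunE; case E: (rho x) => [i|] //.
rewrite (rho_some E); case: (g i) => [j|] //=.
by rewrite !sg_in.
Qed.

Lemma unliftK g : unlift (lift g) = g.
Proof.
apply/ffunP => i; rewrite ffunE lift_sg; case: (g i) => [j|] //=.
by rewrite rho_sg.
Qed.

Lemma liftK f : cl A f -> lift (unlift f) = f.
Proof.
move=> c; apply/ffunP => x; have [xA|xA] := boolP (x \in A); last first.
  by rewrite lift_out // (cl_out c).
have [i ->] := in_sg xA; rewrite lift_sg ffunE.
case E: (f (sg i)) => [y|] //=.
have [_ yA] := clP c E; have [j ->] := in_sg yA.
by rewrite rho_sg.
Qed.

Lemma piter_lift g j i : piter j (lift g) (sg i) = omap sg (piter j g i).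
Proof.
elim: j i => [|j IH] i //.
rewrite !piterSr lift_sg; case: (g i) => [i'|] //=.
Qed.

Lemma fib_lift g i :
  [set y | lift g y == Some (sg i)] = sg @: [set y | g y == Some i].
Proof.
apply/setP => x; have [xA|xA] := boolP (x \in A); last first.
  rewrite inE lift_out //; apply/esym/negbTE/imsetP => [[y _ E]].
  by move: xA; rewrite E sg_in.
have [j ->] := in_sg xA; rewrite inE lift_sg (mem_imset _ _ sg_inj) inE.
case: (g j) => [l|] //=; apply/eqP/eqP => [[/sg_inj ->] | [->]] //.
Qed.

Lemma fibok_lift g : fibok P A (lift g) = fibok P setT g.
Proof.
apply/forall_inP/forall_inP => H i.
  move=> _; rewrite -(card_imset _ sg_inj) -fib_lift; apply: H; exact: sg_in.
move=> iA; have [j ->] := in_sg iA.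
by rewrite fib_lift card_imset //; apply: H; rewrite inE.
Qed.

Lemma img_lift g : img k A (lift g) = sg @: img k setT g.
Proof.
apply/setP => z; apply/idP/idP.
  rewrite inE => /exists_inP [x xA /eqP E]; have [i ei] := in_sg xA.
  rewrite ei piter_lift in E.
  case F: (piter k g i) E => [z'|] //= [<-]; apply: imset_f.
  by rewrite inE; apply/exists_inP; exists i; rewrite ?inE ?F.
move=> /imsetP [z' ]; rewrite inE => /exists_inP [i _ /eqP E] ->.
by rewrite inE; apply/exists_inP; exists (sg i); rewrite ?sg_in // piter_lift E.
Qed.

Lemma card_A : #|A| = m.
Proof.
have E : A =i sg @: [set: 'I_m].
  move=> x; apply/idP/imsetP => [xA | [i _ ->]]; last exact: sg_in.
  by have [i ->] := in_sg xA; exists i.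
by rewrite (eq_card E) card_imset // cardsT card_ord.
Qed.

Lemma W_lift g : W R k A (lift g) = W R k setT g.
Proof. by rewrite /W img_lift card_imset // card_A cardsT card_ord. Qed.

Lemma tot_lift g : tot A (lift g) = tot setT g.
Proof.
apply/forall_inP/forall_inP => H i.
  by move=> _; have := H _ (sg_in i); rewrite lift_sg; case: (g i).
move=> iA; have [j ->] := in_sg iA; rewrite lift_sg.
by have := H j (in_setT j); case: (g j).
Qed.

Lemma m_le_N : (m <= N)%N.
Proof. by rewrite -card_A -[X in (_ <= X)%N]card_ord max_card. Qed.

Lemma cl_setT (M : nat) (g : {ffun 'I_M -> option 'I_M}) : cl setT g.
Proof. by apply/forallP => x; case: (g x) => //= y; rewrite !in_setT. Qed.

Lemma acyc_lift g : acyc A (lift g) = acyc setT g.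
Proof.
apply/forall_inP/forall_inP => H i.
  move=> _; have := H _ (sg_in i); rewrite piter_lift.
  case E: (piter N g i) => [y|] //= _.
  apply/negPn/negP => Hm.
  have Hm' : piter #|[set: 'I_m]| g i != None by rewrite cardsT card_ord.
  by have := pig (cl_closed (cl_setT g)) (in_setT i) Hm' N; rewrite E.
move=> iA; have [j ->] := in_sg iA; rewrite piter_lift.
have := H j (in_setT j) => /eqP E.
by rewrite (piter_None_le m_le_N E).
Qed.

Lemma nroots_lift g : nroots A (lift g) = nroots setT g.
Proof.
rewrite /nroots -(card_imset _ sg_inj); apply: eq_card => x; rewrite inE; have [xA|xA] := boolP (x \in A); last first.
  apply/esym/negbTE/imsetP => [[y _ E]].
  by move: xA; rewrite E sg_in.
have [j ->] := in_sg xA; rewrite lift_sg (mem_imset _ _ sg_inj) !inE.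
by case: (g j).
Qed.

Lemma relabel_sum (Q : pred PFN) (Q' : pred PFm) (F : PFN -> {poly R})
    (F' : PFm -> {poly R}) :
  (forall g, Q (lift g) = Q' g) -> (forall g, Q' g -> F (lift g) = F' g) ->
  \sum_(f | cl A f && Q f) F f = \sum_(g | Q' g) F' g.
Proof.
move=> HQ HF; rewrite (reindex_onto lift unlift); last first.
  by move=> f /andP [c _]; rewrite liftK.
apply: eq_big => g; first by rewrite cl_lift HQ unliftK eqxx andbT.
by rewrite cl_lift HQ unliftK eqxx andbT; exact: HF.
Qed.

End Relabel.

Section RelabelUse.
Variable R : comUnitRingType.
Variables (k : nat) (P : pred nat) (N : nat).
Local Open Scope ring_scope.

Definition Fm (M : nat) := \sum_(g : {ffun 'I_M -> option 'I_M} |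
   tot setT g && fibok P setT g) W R k setT g.
Definition Tm (M : nat) := \sum_(g : {ffun 'I_M -> option 'I_M} |
   acyc setT g && (nroots setT g == 1%N) && fibok P setT g) W R k setT g.

Lemma enum_hA (A : {set 'I_N}) x : (x \in A) = [exists i, @enum_val _ (mem A) i == x].
Proof.
apply/idP/existsP => [xA | [i /eqP <-]]; last exact: enum_valP.
by exists (enum_rank_in xA x); rewrite enum_rankK_in.
Qed.

Lemma Fsum_Fm (A : {set 'I_N}) : Fsum R k P A = Fm #|A|.
Proof.
rewrite /Fsum /Fm.
have inj := @enum_val_inj _ (mem A); have hA := enum_hA A.
under eq_bigl do rewrite -andbA.
apply: (relabel_sum inj hA) => g.
  by rewrite (tot_lift inj hA) (fibok_lift P inj hA).
by move=> _; rewrite (W_lift R k inj hA).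
Qed.

Lemma Tree_Tm (A : {set 'I_N}) : Tree R k P A = Tm #|A|.
Proof.
rewrite /Tree /Tm.
have inj := @enum_val_inj _ (mem A); have hA := enum_hA A.
under eq_bigl do rewrite -!andbA.
apply: (relabel_sum inj hA) => g.
  by rewrite (acyc_lift inj hA) (nroots_lift inj hA) (fibok_lift P inj hA) !andbA.
by move=> _; rewrite (W_lift R k inj hA).
Qed.

End RelabelUse.


Section TreeBridge.
Variable M : nat.
Variable par : {ffun 'I_M -> 'I_M}.
Notation PF := {ffun 'I_M -> option 'I_M}.

Definition hp : PF := [ffun x => if par x == x then None else Some (par x)].

Lemma st_hp : st hp =1 par.
Proof. by move=> y; rewrite /st ffunE; case: eqP. Qed.

Lemma piter_hp j x y : piter j hp x = Some y -> iter j par x = y.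
Proof. by move=> /piter_st <-; apply/esym/eq_iter; exact: st_hp. Qed.

Lemma child_hp x v : child par x v = (hp x == Some v).
Proof.
rewrite /child ffunE; case: (eqVneq (par x) x) => [px|px]; first by rewrite px andbN.
have -> : (Some (par x) == Some v) = (par x == v) by apply/eqP/eqP => [[]|->].
by case: eqP => //= <-; rewrite eq_sym.
Qed.

Lemma nofix_piter j x : (forall i, (i < j)%N -> par (iter i par x) != iter i par x) ->
  piter j hp x = Some (iter j par x).
Proof.
elim: j => [|j IH] H //; rewrite piterS IH /=; last first.
  by move=> i lt; apply: H; exact: ltnW.
by rewrite ffunE (negbTE (H j (ltnSn j))).
Qed.

Lemma fibok_hp (P : pred nat) : fibok P setT hp = treeP P par.
Proof.
rewrite /fibok /treeP; apply/forall_inP/forallP => H v.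
  rewrite /nchildren (eq_card (B := [set y | hp y == Some v])); first exact: H.
  by move=> x; rewrite !inE child_hp.
move=> _; rewrite (eq_card (B := [set y | child par y v])); first exact: H.
by move=> x; rewrite !inE child_hp.
Qed.

Lemma hp_none x : (hp x == None) = (par x == x).
Proof. by rewrite ffunE; case: (par x == x). Qed.

Lemma rtree_hp : rtree par = acyc setT hp && (nroots setT hp == 1%N).
Proof.
apply/existsP/andP => [[r /andP [/eqP pr /forallP it]] | [a /cards1P [r Er]]].
  have fixr y : par y = y -> y = r.
    by move=> py; have := it y; rewrite iter_fix // => /eqP.
  split.
    apply/forall_inP => x _; apply/negPn/negP => Hx.
    have Hx' : piter #|[set: 'I_M]| hp x != None by rewrite cardsT card_ord.
    have all := pig (cl_closed (cl_setT hp)) (in_setT x) Hx'.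
    case E: (piter M hp x) Hx => [y|] // _.
    have yr : y = r by rewrite -(piter_hp E); apply/eqP; exact: it.
    by have := all M.+1; rewrite piterS E /= ffunE yr pr eqxx.
  apply/cards1P; exists r; apply/setP => y; rewrite !inE hp_none.
  by apply/eqP/eqP => [/fixr|->].
have rin : r \in [set y in setT | hp y == None] by rewrite Er inE.
move: rin; rewrite !inE hp_none => /eqP pr.
exists r; rewrite pr eqxx /=; apply/forallP => x.
have [j [r' [jM Pj fr']]] := root_exists (eqP (forall_inP a x (in_setT x))).
have r'r : r' = r.
  by apply/set1P; rewrite -Er !inE fr'.
have ij := piter_hp Pj; rewrite r'r in ij.
have -> : iter M par x = iter (M - j) par (iter j par x) by rewrite -iterD subnK.
by rewrite ij iter_fix.
Qed.

Section Heights.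
Hypothesis rt : rtree par.

Lemma acyc_hp : acyc setT hp.
Proof. by move: rt; rewrite rtree_hp => /andP []. Qed.

Lemma piter_hp_none x : piter M hp x = None.
Proof. by apply/eqP; exact: (forall_inP acyc_hp x (in_setT x)). Qed.

Lemma dd_lt j w v : piter j hp w = Some v -> (j < M)%N.
Proof.
move=> E; rewrite ltnNge; apply/negP => le.
by rewrite (piter_None_le le (piter_hp_none w)) in E.
Qed.

Lemma piter_defined i j w v : (i <= j)%N -> piter j hp w = Some v ->
  piter i hp w = Some (iter i par w).
Proof.
move=> le E; case F: (piter i hp w) => [y|]; last first.
  by rewrite (piter_None_le le F) in E.
by rewrite (piter_hp F).
Qed.

Lemma no_cycle v t : (0 < t)%N -> piter t hp v = Some v -> False.
Proof.
move=> t0 E.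
have per : forall s, piter (s * t) hp v = Some v.
  elim=> [|s IH] //; by rewrite mulSn piterD IH /= E.
have := piter_None_le (leq_pmulr M t0) (piter_hp_none v).
by rewrite (per M).
Qed.

Lemma down_dist_hp w v j : down_dist par w v j = (piter j hp w == Some v).
Proof.
apply/andP/eqP => [[/eqP ij /forallP nv] | E].
  rewrite -ij; apply: nofix_piter => i lt; apply/negP => /eqP fi.
  apply: (negP (nv (Ordinal lt))) => /=.
  rewrite -ij; have -> : iter j par w = iter (j - i) par (iter i par w).
    by rewrite -iterD subnK // ltnW.
  by rewrite (iter_fix _ fi).
split; first by rewrite (piter_hp E).
apply/forallP => -[i lt] /=; apply/eqP => iv.
have Pi := piter_defined (ltnW lt) E; rewrite iv in Pi.
have : piter (j - i + i) hp w = Some v by rewrite subnK // ltnW.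
rewrite piterD Pi /= => Ev.
by apply: (no_cycle _ Ev); rewrite subn_gt0.
Qed.

Lemma leaf_hp w : is_leaf par w = [forall y, hp y != Some w].
Proof.
rewrite /is_leaf /nchildren cards_eq0; apply/eqP/forallP => [E y | H].
  apply/negP => /eqP hy.
  have : y \in [set x | child par x w] by rewrite inE child_hp hy.
  by rewrite E inE.
by apply/setP => y; rewrite !inE child_hp; apply/negbTE; exact: H.
Qed.

Lemma height_hp k v : (k <= height par v)%N = [exists x, piter k hp x == Some v].
Proof.
apply/idP/idP => [H | /existsP [x /eqP Ex]].
  case: (boolP [exists x, piter k hp x == Some v]) => // Hn; exfalso.
  case: k H Hn => [|k] H Hn.
    by move/negP: Hn; apply; apply/existsP; exists v.
  move: H; apply/negP; rewrite -ltnNge ltnS.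
  apply/bigmax_leqP => w _; apply/bigmax_leqP => j; rewrite down_dist_hp => /eqP E.
  rewrite leqNgt; apply/negP => lt.
  have : piter (k.+1 + (j - k.+1)) hp w = Some v by rewrite subnKC // ltnW.
  rewrite piterD (piter_defined (leq_subr _ _) E) /= => Ey.
  by move/negP: Hn; apply; apply/existsP; eexists; apply/eqP; exact: Ey.
pose Aj := [pred j : 'I_M | [exists w, piter j hp w == Some v]].
have kM := dd_lt Ex.
have kA : Ordinal kM \in Aj by rewrite inE /=; apply/existsP; exists x; rewrite Ex.
have cA : (0 < #|Aj|)%N by apply/card_gt0P; exists (Ordinal kM).
have [j0 j0A mx] := eq_bigmax_cond (fun j : 'I_M => nat_of_ord j) cA.
move: (j0A); rewrite inE => /existsP [w0 /eqP E0].
have kj : (k <= j0)%N by rewrite -mx; exact: (leq_bigmax_cond (Ordinal kM) kA).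
have lf : is_leaf par w0.
  rewrite leaf_hp; apply/forallP => c; apply/negP => /eqP hc.
  have Ec : piter j0.+1 hp c = Some v by rewrite piterSr hc.
  have lt := dd_lt Ec.
  have inA : Ordinal lt \in Aj by rewrite inE; apply/existsP; exists c; rewrite Ec.
  by have := leq_bigmax_cond (F := fun j : 'I_M => nat_of_ord j) (Ordinal lt) inA; rewrite mx /= ltnn.
apply: (leq_trans kj); rewrite /height.
apply: (leq_trans _ (leq_bigmax_cond w0 lf)).
have dd : down_dist par w0 v j0 by rewrite down_dist_hp E0.
exact: (leq_bigmax_cond j0 dd).
Qed.

Lemma chi_hp k : chi k par = (M - #|img k setT hp|)%N.
Proof.
have -> : img k setT hp = ~: [set v | (height par v < k)%N].
  apply/setP => v; rewrite !inE -leqNgt height_hp.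
  by apply/existsP/existsP => -[x Ex]; exists x; move: Ex; rewrite ?in_setT.
have := cardsC [set v | (height par v < k)%N]; have := card_ord M; rewrite /chi.
set a := #|[set v | _]|; set b := #|~: _|; set c := #|_|; lia.
Qed.

End Heights.
End TreeBridge.


Section DefsBridge.
Variable R : comUnitRingType.
Variables (k : nat) (P : pred nat).
Local Open Scope ring_scope.

Lemma Pinner n :
  \sum_(f : {ffun 'I_n -> option 'I_n} |
           [forall x : 'I_n, #|[set y | f y == Some x]| \in P])
     'X^(n - #|[set z : 'I_n | [exists x, piter k f x == Some z]]|)
  = Psum R k P [set: 'I_n].
Proof.
rewrite /Psum; apply: eq_big => f.
  rewrite cl_setT /=; apply/forallP/forall_inP => H x; first by move=> _; exact: H.
  exact: H (in_setT x).
move=> _; rewrite /W cardsT card_ord; congr ('X^(_ - _)); apply: eq_card => z.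
rewrite !inE; apply/existsP/existsP => -[x Ex]; exists x; move: Ex; by rewrite ?in_setT.
Qed.

Definition sf M (f : {ffun 'I_M -> 'I_M}) : {ffun 'I_M -> option 'I_M} :=
  [ffun x => Some (f x)].
Definition unsf M (g : {ffun 'I_M -> option 'I_M}) : {ffun 'I_M -> 'I_M} :=
  [ffun x => odflt x (g x)].

Lemma piter_sf M (f : {ffun 'I_M -> 'I_M}) j x : piter j (sf f) x = Some (iter j f x).
Proof. by elim: j => // j IH; rewrite piterS IH /= ffunE. Qed.

Lemma Finner M :
  Fm R k P M = \sum_(f : {ffun 'I_M -> 'I_M} | [forall x : 'I_M, #|[set y | f y == x]| \in P])
                 'X^(M - #|[set iter k f x | x : 'I_M]|).
Proof.
rewrite /Fm (reindex_onto (@sf M) (@unsf M)); last first.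
  move=> g /andP [/forall_inP t _]; apply/ffunP => x; rewrite !ffunE.
  by have := t x (in_setT x); case: (g x).
apply: eq_big => f.
  have -> : unsf (sf f) = f by apply/ffunP => x; rewrite !ffunE.
  rewrite eqxx andbT; have -> : tot setT (sf f).
    by apply/forall_inP => x _; rewrite ffunE.
  rewrite /=; apply/forall_inP/forallP => H x.
    rewrite (eq_card (B := [set y | sf f y == Some x])); first exact: H.
    by move=> y; rewrite !inE ffunE.
  move=> _; rewrite (eq_card (B := [set y | f y == x])); first exact: H.
  by move=> y; rewrite !inE ffunE.
move=> _; rewrite /W cardsT card_ord; congr ('X^(_ - _)); apply: eq_card => z.
rewrite !inE; apply/exists_inP/imsetP => [[x _]|[x _ ->]].
  by rewrite piter_sf => /eqP [<-]; exists x.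
by exists x; rewrite ?in_setT // piter_sf.
Qed.

Lemma acyc_noloop M (g : {ffun 'I_M -> option 'I_M}) x :
  acyc setT g -> g x != Some x.
Proof.
move=> a; apply/negP => /eqP gx.
have : forall j, piter j g x = Some x by elim=> // j IH; rewrite piterS IH.
by move=> /(_ M); rewrite (eqP (forall_inP a x (in_setT x))).
Qed.

Lemma Tinner M :
  Tm R k P M = \sum_(par : {ffun 'I_M -> 'I_M} | rtree par && treeP P par) 'X^(chi k par).
Proof.
rewrite /Tm (reindex_onto (@hp M) (@unsf M)); last first.
  move=> g /andP [/andP [a _] _]; apply/ffunP => x; rewrite !ffunE.
  have := acyc_noloop x a; case: (g x) => [y|] /=; last by rewrite eqxx.
  by move=> ne; case: eqP => // yx; rewrite yx eqxx in ne.
apply: eq_big => par.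
  have -> : unsf (hp par) = par.
    by apply/ffunP => x; rewrite !ffunE; case: eqP.
  by rewrite eqxx andbT rtree_hp fibok_hp.
move=> /andP [/andP [/andP [a n] _] _].
have rt : rtree par by rewrite rtree_hp a n.
by rewrite /W cardsT card_ord -chi_hp.
Qed.

Lemma Tm0 : Tm R k P 0 = 0.
Proof.
rewrite /Tm big_pred0 // => g.
have -> : nroots setT g = 0%N by rewrite /nroots; apply/eqP; rewrite cards_eq0; apply/eqP/setP => -[].
by rewrite andbF.
Qed.

End DefsBridge.


Section Alg.
Variable R : comUnitRingType.
Local Open Scope ring_scope.
Hypothesis HQ : forall n : nat, (n.+1)%:R \is a @GRing.unit R.

Lemma nat_unit n : (0 < n)%N -> (n%:R : R) \is a GRing.unit.
Proof. by case: n => // n _; exact: HQ. Qed.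

Lemma fact_unit n : ((n`!)%:R : R) \is a GRing.unit.
Proof. exact/nat_unit/fact_gt0. Qed.

Lemma serpowS (a : series R) j n : serpow a j.+1 n = sermul a (serpow a j) n.
Proof. by []. Qed.

Lemma serpow_small (a : series R) : a 0%N = 0 ->
  forall j m, (m < j)%N -> serpow a j m = 0.
Proof.
move=> a0; elim=> [|j IH] m lt //.
rewrite serpowS /sermul big1 // => i _.
have [i0|ip] := posnP i; first by rewrite i0 a0 mul0r.
by rewrite IH ?mulr0 //; have := ltn_ord i; lia.
Qed.

Lemma serpow_poly (a : series R) L j n : (n < L)%N ->
  serpow a j n = ((\poly_(i < L) a i) ^+ j)`_n.
Proof.
elim: j n => [|j IH] n lt.
  rewrite expr0 coef1; case: n {lt} => [|n].
    by rewrite eqxx mulr1n.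
  by rewrite mulr0n.
rewrite serpowS exprS coefM /sermul; apply: eq_bigr => i _.
have iL : (i < L)%N by apply: leq_ltn_trans lt; have := ltn_ord i.
rewrite coef_poly iL.
rewrite IH //; apply: leq_ltn_trans lt; exact: leq_subr.
Qed.

Lemma serpow_deriv (a : series R) j n :
  (n.+1)%:R *: serpow a j.+1 n.+1 =
  (j.+1)%:R *: \sum_(i < n.+1) ((i.+1)%:R *: a i.+1) * serpow a j (n - i)%N.
Proof.
pose A := \poly_(i < n.+2) a i.
rewrite (serpow_poly a (L := n.+2)) // !scaler_nat.
have := coef_deriv (A ^+ j.+1) n; rewrite deriv_exp /= coefMn coefM => <-.
congr (_ *+ _); apply: eq_bigr => i _.
have iL : (i.+1 < n.+2)%N by rewrite ltnS ltnS; have := ltn_ord i.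
rewrite coef_deriv coef_poly iL.
rewrite scaler_nat (serpow_poly a (L := n.+2)) //.
by rewrite ltnS; apply: (leq_trans (leq_subr _ _)).
Qed.

Lemma serexp_rec (a : series R) : a 0%N = 0 -> forall s,
  (s.+1)%:R *: serexp a s.+1 =
  \sum_(i < s.+1) ((i.+1)%:R *: a i.+1) * serexp a (s - i)%N.
Proof.
move=> a0 s; rewrite /serexp big_ord_recl.
have -> : serpow a (nat_of_ord (@ord0 s.+1)) s.+1 = 0 by [].
rewrite scaler0 add0r scaler_sumr.
transitivity (\sum_(j < s.+1) \sum_(i < s.+1)
   ((i.+1)%:R *: a i.+1) * (((j`!)%:R)^-1 *: serpow a j (s - i)%N)).
  apply: eq_bigr => j _; rewrite lift0.
  rewrite scalerA mulrC -scalerA serpow_deriv scalerA.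
  have -> : ((j.+1)`!%:R)^-1 * (j.+1)%:R = ((j`!)%:R)^-1 :> R.
    by rewrite factS natrM invrM ?fact_unit ?HQ // -mulrA mulVr ?HQ // mulr1.
  by rewrite scaler_sumr; apply: eq_bigr => i _; rewrite scalerAr.
rewrite exchange_big /=; apply: eq_bigr => i _.
rewrite mulr_sumr (big_ord_widen (n1 := (s - i).+1) s.+1 (fun j => ((i.+1)%:R *: a i.+1) *
   (((j`!)%:R)^-1 *: serpow a j (s - i)%N))); last by rewrite ltnS leq_subr.
rewrite [RHS]big_mkcond /=; apply: eq_bigr => j _; case: ifP => // lt.
by rewrite serpow_small ?scaler0 ?mulr0 // ltnNge -ltnS lt.
Qed.

End Alg.


Section Final.
Variable R : comUnitRingType.
Local Open Scope ring_scope.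
Hypothesis HQ : forall n : nat, (n.+1)%:R \is a @GRing.unit R.
Variables (k : nat) (P : pred nat).

Lemma sum_subsets N (S : {set 'I_N}) (H : nat -> {poly R}) :
  \sum_(B : {set 'I_N} | B \subset S) H #|B| =
  \sum_(i < #|S|.+1) 'C(#|S|, i)%:R *: H i.
Proof.
rewrite (partition_big (fun B : {set 'I_N} => (inord #|B| : 'I_#|S|.+1)) xpredT) //.
apply: eq_bigr => i _.
transitivity (\sum_(B in [set B : {set 'I_N} | B \subset S & #|B| == i]) H i).
  apply: eq_big => B.
    rewrite inE; case sB: (B \subset S) => //=.
    by rewrite -(inj_eq val_inj) /= inordK // ltnS subset_leq_card.
  by move=> /andP [sB /eqP <-]; rewrite inordK // ltnS subset_leq_card.
by rewrite sumr_const cards_draws scaler_nat.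
Qed.

Lemma sum_subsets_x0 N (S : {set 'I_N}) x0 (G : nat -> {poly R}) : x0 \in S ->
  \sum_(A : {set 'I_N} | (A \subset S) && (x0 \in A)) G #|A| =
  \sum_(i < #|S|.-1.+1) 'C(#|S|.-1, i)%:R *: G i.+1.
Proof.
move=> x0S.
rewrite (reindex_onto (fun B : {set 'I_N} => x0 |: B) (fun A => A :\ x0)); last first.
  by move=> A /andP [_ xA]; rewrite setD1K.
have cS : #|S :\ x0| = #|S|.-1 by rewrite (cardsD1 x0 S) x0S.
rewrite -cS -(sum_subsets (S :\ x0) (fun i => G i.+1)); apply: eq_big => B.
  rewrite setU11 andbT subUset sub1set x0S /= subsetD1.
  have [xB|xB] := boolP (x0 \in B); last by rewrite setU1K // eqxx.
  rewrite andbF; apply/negbTE; rewrite negb_and; apply/orP; right; apply/eqP => E.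
  by have := setD11 x0 (x0 |: B); rewrite E xB.
move=> /andP [_ /eqP E].
have xB : x0 \notin B by rewrite -E setD11.
by rewrite cardsU1 xB.
Qed.

Lemma Forest_set0 N : Forest R k P (set0 : {set 'I_N}) = 1.
Proof.
rewrite /Forest (big_pred1 [ffun => None]) => [|f].
  by rewrite /W cards0 sub0n expr0.
have -> : acyc set0 f by apply/forall_inP => x; rewrite inE.
have -> : fibok P set0 f by apply/forall_inP => x; rewrite inE.
rewrite !andbT /=; apply/idP/eqP => [c | ->].
  by apply/ffunP => x; rewrite ffunE (cl_out c) // inE.
by apply/forallP => x; rewrite ffunE.
Qed.

Lemma binfact_R n i : (i <= n)%N ->
  (('C(n, i) * (n - i)`!)%:R : R) = (n`!)%:R * ((i`!)%:R)^-1.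
Proof.
move=> le; apply: (canRL (mulrK (fact_unit HQ i))).
by rewrite -natrM -mulnA [((n - i)`! * i`!)%N]mulnC bin_fact.
Qed.

Lemma fact_inv_S j : ((j.+1)`!%:R)^-1 * (j.+1)%:R = ((j`!)%:R)^-1 :> R.
Proof.
by rewrite factS natrM invrM ?(fact_unit HQ) ?HQ // -mulrA mulVr ?HQ // mulr1.
Qed.

Notation tau := (Tser R k P).

Lemma tau_eq m : tau m = ((m`!)%:R)^-1 *: Tm R k P m.
Proof. by rewrite /Tser /egf Tinner. Qed.

Lemma tau0 : tau 0%N = 0.
Proof. by rewrite tau_eq Tm0 scaler0. Qed.

Lemma alg_step s' :
  \sum_(i < s'.+1) 'C(s', i)%:R *: (Tm R k P i.+1 *
      (((s'.+1 - i.+1)`!)%:R *: serexp tau (s'.+1 - i.+1)%N)) =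
  ((s'.+1)`!)%:R *: serexp tau s'.+1.
Proof.
rewrite factS natrM mulrC -scalerA (serexp_rec HQ tau0) scaler_sumr.
apply: eq_bigr => i _; rewrite subSS.
rewrite -scalerAr scalerA -natrM binfact_R; last by have := ltn_ord i.
rewrite tau_eq scalerA -scalerAl scalerA [_ / (i.+1)`!%:R]mulrC fact_inv_S.
by [].
Qed.

Lemma Forest_formula N (S : {set 'I_N}) :
  Forest R k P S = (#|S|`!)%:R *: serexp tau #|S|.
Proof.
have [s Hs] := ubnP #|S|; elim: s S Hs => // s IH S Hs.
have [->|/set0Pn [x0 x0S]] := eqVneq S set0.
  rewrite Forest_set0 cards0 /serexp big_ord1 scalerA mulrV ?(fact_unit HQ) // scale1r.
  by [].
rewrite (decomp2 R k P x0S).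
have cpos : (0 < #|S|)%N by apply/card_gt0P; exists x0.
rewrite (eq_bigr (fun A : {set 'I_N} => Tm R k P #|A| *
    (((#|S| - #|A|)%N`!)%:R *: serexp tau (#|S| - #|A|)%N))); last first.
  move=> A /andP [sAS x0A]; rewrite Tree_Tm.
  have cD : #|S :\: A| = (#|S| - #|A|)%N by rewrite cardsD (setIidPr sAS).
  have cA : (0 < #|A|)%N by apply/card_gt0P; exists x0.
  rewrite IH ?cD //; lia.
rewrite (sum_subsets_x0 (fun a => Tm R k P a *
    (((#|S| - a)%N`!)%:R *: serexp tau (#|S| - a)%N)) x0S).
move: cpos; case: #|S| => // s' _.
exact: alg_step.
Qed.

End Final.

Local Open Scope ring_scope.

Theorem theorem5p11 (R : comUnitRingType)
  (HQ : forall n : nat, (n.+1)%:R \is a @GRing.unit R)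
  (k : nat) (P : pred nat) :
  forall n : nat,
    Pser R k P n = sermul (Fser R k P) (serexp (Tser R k P)) n.
Proof.
move=> n; rewrite /Pser /egf Pinner decomp1.
rewrite (eq_bigr (fun A : {set 'I_n} => Fm R k P #|A| *
    (((n - #|A|)%N`!)%:R *: serexp (Tser R k P) (n - #|A|)%N))); last first.
  move=> A _; rewrite Fsum_Fm (Forest_formula HQ).
  by rewrite cardsD setTI cardsT card_ord.
rewrite (sum_subsets [set: 'I_n] (fun a => Fm R k P a *
    (((n - a)%N`!)%:R *: serexp (Tser R k P) (n - a)%N))).
rewrite cardsT card_ord /sermul scaler_sumr; apply: eq_bigr => i _.
rewrite /Fser /egf -Finner -scalerAl -scalerAr !scalerA -mulrA -natrM.
rewrite (binfact_R HQ); last by have := ltn_ord i.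
by rewrite mulrA mulVr ?(fact_unit HQ) // mul1r.
Qed.
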